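(* Let $r\ge 2$ be a constant and $\lambda\le n^r$. Consider $\lambda$ isolated islands (no migration), each independently running the (1+1) EA with mutation probability $1/n$ on $\mathrm{Fork}_{n,r}$ from an independent uniformly random initial string. The expected total number of fitness evaluations (summed over all islands, one per island per round) until all $\lambda$ islands have the optimum is in $\Omega(\lambda n^{2r}\log\lambda)$.
   Context: $\mathrm{Fork}_{n,r}(x)=n+1$ if $x=0^r1^{n-r}$, $n+2$ if $x=1^{n-r}0^r$ (the optimum), and $|x|_1$ otherwise, for $n\ge 2r$. The (1+1) EA: each round create $y$ by flipping each bit of the current $x$ independently with probability $1/n$ and set $x\gets y$ if the fitness of $y$ is at least that of $x$. *)

(* Defs.v *)
From HB Require Import structures.
From mathcomp Require Import all_boot all_order all_algebra.
From mathcomp Require Import all_classical all_reals all_analysis.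
Set Implicit Arguments. Unset Strict Implicit. Unset Printing Implicit Defensive.
Import Order.TTheory GRing.Theory Num.Theory.
Local Open Scope ring_scope.

(* bit strings of length n, bit i is position i (0-based, left to right) *)
Definition bits (n : nat) := {ffun 'I_n -> bool}.

Definition ones n (x : bits n) : nat := #|[pred i | x i]|.

Definition fork_local n r : bits n := [ffun i : 'I_n => (r <= i)%N].
Definition fork_opt n r : bits n := [ffun i : 'I_n => (i < n - r)%N].

Definition fork n r (x : bits n) : nat :=
  if x == fork_local n r then n.+1
  else if x == fork_opt n r then n.+2
  else ones x.

Definition hamming n (x y : bits n) : nat := #|[pred i | x i != y i]|.

Definition mutp (R : realType) n (x z : bits n) : R :=
  (n%:R^-1) ^+ hamming x z * (1 - n%:R^-1) ^+ (n - hamming x z).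

Definition ea_step (R : realType) n r (x y : bits n) : R :=
  \sum_(z : bits n) mutp R x z
     * ((if (fork r x <= fork r z)%N then z else x) == y)%:R.

Definition islands n lam := {ffun 'I_lam -> bits n}.

Definition islands_step (R : realType) n r lam (X Y : islands n lam) : R :=
  \prod_(i < lam) ea_step R r (X i) (Y i).

(* independent uniform initialisation = uniform on joint states *)
Definition islands_init (R : realType) n lam (X : islands n lam) : R :=
  (#|{: islands n lam}|%:R)^-1.

Definition all_opt n r lam (X : islands n lam) : bool :=
  [forall i, X i == fork_opt n r].

(* surv t X = P(X_t = X and no time s <= t has all islands at the optimum) *)
Fixpoint surv (R : realType) n r lam (t : nat) (X : islands n lam) : R :=
  if all_opt r X then 0 else
  match t with
  | 0 => islands_init R X
  | t'.+1 => \sum_(Y : islands n lam) surv R r t' Y * islands_step R r Y X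
  end.

(* P(T > t), T = first round at which all islands have the optimum *)
Definition tailT (R : realType) n r lam (t : nat) : R :=
  \sum_(X : islands n lam) surv R r t X.

(* E[T] = sum_{t >= 0} P(T > t), in the extended reals *)
Definition expected_rounds (R : realType) n r lam : \bar R :=
  (\sum_(0 <= t <oo) (tailT R n r lam t)%:E)%E.

Definition expected_evals (R : realType) n r lam : \bar R :=
  ((lam%:R)%:E * expected_rounds R n r lam)%E.

(* Main.v *)
Set Warnings "-all".
Require Import Defs.
From HB Require Import structures.
From mathcomp Require Import all_boot all_order all_algebra.
From mathcomp Require Import all_classical all_reals all_analysis.
From mathcomp Require Import zify ring lra.
Import Order.TTheory GRing.Theory Num.Theory.
Local Open Scope ring_scope.

Section Single.
Variables (R : realType) (n r : nat).
Hypothesis hr : (0 < r)%N.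
Hypothesis hnr : (2 * r < n)%N.

Let L := fork_local n r.
Let O := fork_opt n r.
Definition inA (x : bits n) := (x == L) || (x == O).
Let step := @ea_step R n r.
Let q : R := n%:R^-1.
Definition res (x z : bits n) := if (fork r x <= fork r z)%N then z else x.

Lemma n_gt0 : (0 < n)%N. Proof. lia. Qed.

Lemma LneO : L != O.
Proof.
apply/negP => /eqP h.
have := congr1 (fun f : bits n => f (Ordinal n_gt0)) h.
rewrite /L /O /fork_local /fork_opt !ffunE /=.
have -> : (r <= 0)%N = false by lia.
have -> : (0 < n - r)%N = true by lia.
by [].
Qed.

Lemma fork_L : fork r L = n.+1.
Proof. by rewrite /fork eqxx. Qed.

Lemma fork_O : fork r O = n.+2.
Proof. by rewrite /fork eq_sym (negbTE LneO) eqxx. Qed.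

Lemma ones_le (x : bits n) : (ones x <= n)%N.
Proof. by rewrite /ones; apply: leq_trans (max_card _) _; rewrite card_ord. Qed.

Lemma fork_notA (x : bits n) : ~~ inA x -> fork r x = ones x.
Proof.
rewrite /inA negb_or => /andP[h1 h2].
by rewrite /fork -/L -/O (negbTE h1) (negbTE h2).
Qed.

Lemma fork_cases (x : bits n) : inA x \/ (fork r x = ones x /\ (ones x <= n)%N).
Proof.
case hx: (inA x); first by left.
by right; rewrite fork_notA ?hx // ones_le.
Qed.

Lemma fork_le (x : bits n) : (fork r x <= n.+2)%N.
Proof.
case: (fork_cases x) => [|[-> h]]; last lia.
by case/orP => /eqP ->; rewrite ?fork_L ?fork_O.
Qed.

Lemma fork_ge (x : bits n) : (n.+1 <= fork r x)%N -> inA x.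
Proof. case: (fork_cases x) => [//|[-> h]]; lia. Qed.

Lemma fork_eqO (x : bits n) : (n.+2 <= fork r x)%N -> x = O.
Proof.
move=> h; have := fork_ge x (ltnW h); case/orP => /eqP hx //.
by move: h; rewrite hx fork_L ltnn.
Qed.

Lemma q_ge0 : 0 <= q. Proof. by rewrite /q invr_ge0. Qed.
Lemma q_le1 : q <= 1.
Proof. rewrite /q invf_le1 ?ler1n ?ltr0n; lia. Qed.

Lemma mutp_prod (x z : bits n) :
  mutp R x z = \prod_i (if x i != z i then q else 1 - q).
Proof.
rewrite /mutp (bigID (fun i => x i != z i)) /=.
rewrite (eq_bigr (fun _ => q)); last by move=> i ->.
rewrite [X in _ = _ * X](eq_bigr (fun _ => 1 - q)); last by move=> i /negbTE ->.
rewrite !prodr_const.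
congr (_ ^+ _ * _ ^+ _).
have hc := cardC [pred i | x i != z i]; rewrite card_ord in hc.
rewrite /hamming -[X in _ = X](@eq_card _ [predC [pred i | x i != z i]]).
  move: hc. set a := #|_|. set b := #|_|. lia.
by move=> i; rewrite !inE.
Qed.

Lemma mutp_ge0 (x z : bits n) : 0 <= mutp R x z.
Proof.
rewrite mutp_prod; apply: prodr_ge0 => i _; case: ifP => _; 
  [exact: q_ge0 | rewrite subr_ge0; exact: q_le1].
Qed.

Lemma mutp_sum (x : bits n) : \sum_z mutp R x z = 1.
Proof.
under eq_bigr do rewrite mutp_prod.
rewrite -(bigA_distr_bigA (fun i (b : bool) => if x i != b then q else 1 - q)).
rewrite /= (eq_bigr (fun _ => 1)) ?big1_eq // => i _.
rewrite big_bool /=; case: (x i) => /=; ring.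
Qed.


Lemma step_def (x y : bits n) :
  step x y = \sum_z mutp R x z * ((res x z == y)%:R).
Proof. by []. Qed.

Lemma sum_ind (a : bits n) : \sum_y ((a == y)%:R : R) = 1.
Proof.
rewrite (bigD1 a) //= eqxx big1 ?addr0 // => y.
by rewrite eq_sym => /negbTE ->.
Qed.

Lemma step_sum (x : bits n) : \sum_y step x y = 1.
Proof.
under eq_bigr do rewrite step_def.
rewrite exchange_big /=.
under eq_bigr do rewrite -mulr_sumr sum_ind mulr1.
exact: mutp_sum.
Qed.

Lemma step_ge0 (x y : bits n) : 0 <= step x y.
Proof.
rewrite step_def; apply: sumr_ge0 => z _; apply: mulr_ge0; first exact: mutp_ge0.
exact: ler0n.
Qed.

Lemma res_O (z : bits n) : res O z = O.
Proof. rewrite /res fork_O; case: ifP => // h; exact: fork_eqO. Qed.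

Lemma step_O (y : bits n) : step O y = (O == y)%:R.
Proof.
rewrite step_def; under eq_bigr do rewrite res_O.
by rewrite -mulr_suml mutp_sum mul1r.
Qed.

Lemma res_L (z : bits n) : (res L z == L) || (res L z == O).
Proof.
rewrite /res; case: ifP => h; last by rewrite eqxx.
by apply: fork_ge; rewrite -fork_L.
Qed.

Lemma step_LLO : step L L + step L O = 1.
Proof.
rewrite !step_def -big_split /=.
under eq_bigr do rewrite -mulrDr.
rewrite -[RHS](mutp_sum L); apply: eq_bigr => z _.
have hLO := negbTE LneO; have hOL : (O == L) = false by rewrite eq_sym.
case/orP: (res_L z) => /eqP ->; rewrite eqxx ?hLO ?hOL.
  by rewrite addr0 mulr1.
by rewrite add0r mulr1.
Qed.

Lemma step_A_notA (x y : bits n) : inA x -> ~~ inA y -> step x y = 0.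
Proof.
rewrite /inA negb_or => hx /andP[hyL hyO].
case/orP: hx => /eqP ->.
  rewrite step_def big1 // => z _.
  case/orP: (res_L z) => /eqP ->.
    by rewrite eq_sym (negbTE hyL) mulr0.
  by rewrite eq_sym (negbTE hyO) mulr0.
by rewrite step_O eq_sym (negbTE hyO).
Qed.

Lemma step_OL : step O L = 0.
Proof. by rewrite step_O eq_sym (negbTE LneO). Qed.

Lemma step_LO : step L O = mutp R L O.
Proof.
rewrite step_def (bigD1 O) //= big1 ?addr0.
  by rewrite /res fork_L fork_O leqnSn eqxx mulr1.
move=> z hz; rewrite /res; case: ifP => _.
  by rewrite (negbTE hz) mulr0.
by rewrite (negbTE LneO) mulr0.
Qed.

Lemma ham_LO : (2 * r <= hamming L O)%N.
Proof.
rewrite /hamming -sum1_card big_mkcond /=.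
rewrite (eq_bigr (fun i : 'I_n => if (r <= i)%N != (i < n - r)%N then 1%N else 0%N)); last first.
  by move=> i _; rewrite !inE /L /O /fork_local /fork_opt !ffunE.
rewrite -(big_mkord xpredT (fun i => if (r <= i)%N != (i < n - r)%N then 1%N else 0%N)).
rewrite (@big_cat_nat _ _ _ r) /=; [|lia|lia].
rewrite [X in (_ + X)%N](@big_cat_nat _ _ _ (n - r)) /=; [|lia|lia].
rewrite (@eq_big_nat _ _ _ 0 r _ (fun _ => 1%N)); last first.
  move=> i /andP[_ hi]; have -> : (r <= i)%N = false by lia.
  have -> : (i < n - r)%N = true by lia. by [].
rewrite [X in (_ <= _ + (_ + X))%N](@eq_big_nat _ _ _ (n - r) n _ (fun _ => 1%N)); last first.
  move=> i /andP[h1 hi]; have -> : (r <= i)%N = true by lia.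
  have -> : (i < n - r)%N = false by lia. by [].
rewrite !sum_nat_const_nat; lia.
Qed.

Definition pL := step L O.

Lemma pL_ge0 : 0 <= pL. Proof. exact: step_ge0. Qed.
Lemma pL_le1 : pL <= 1.
Proof. have := step_LLO; have := step_ge0 L L; rewrite /pL; lra. Qed.

Lemma pL_le : pL <= q ^+ (2 * r).
Proof.
rewrite /pL step_LO /mutp -/q.
apply: le_trans (_ : q ^+ hamming L O <= _).
  apply: ler_piMr; first by apply: exprn_ge0; exact: q_ge0.
  apply: exprn_ile1; rewrite ?subr_ge0 ?q_le1 //; have := q_le1; have := q_ge0; lra.
apply: ler_wiXn2l; [exact: q_ge0 | exact: q_le1 | exact: ham_LO].
Qed.


Definition rv (x : bits n) : bits n := [ffun i => x (rev_ord i)].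

Lemma rvK : involutive rv.
Proof. by move=> x; apply/ffunP => i; rewrite !ffunE rev_ordK. Qed.

Lemma rv_inj : injective rv.
Proof. exact: inv_inj rvK. Qed.

Lemma rv_L : rv L = O.
Proof.
apply/ffunP => i; rewrite !ffunE /=.
case: i => i hi /=; apply/idP/idP => h; lia.
Qed.

Lemma rv_O : rv O = L.
Proof. by rewrite -rv_L rvK. Qed.

Lemma inA_rv (x : bits n) : inA (rv x) = inA x.
Proof. by rewrite /inA -{1}rv_L -{1}rv_O !(inj_eq rv_inj) orbC. Qed.

Lemma card_rv (P : pred 'I_n) : #|[pred i | P (rev_ord i)]| = #|P|.
Proof.
rewrite -!sum1_card (reindex_inj rev_ord_inj) /=.
by apply: eq_bigl => i; rewrite !inE rev_ordK.
Qed.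

Lemma ham_rv (x z : bits n) : hamming (rv x) (rv z) = hamming x z.
Proof.
rewrite /hamming -(card_rv [pred i | x i != z i]).
by apply: eq_card => i; rewrite !inE !ffunE.
Qed.

Lemma ones_rv (x : bits n) : ones (rv x) = ones x.
Proof.
rewrite /ones -(card_rv [pred i | x i]).
by apply: eq_card => i; rewrite !inE !ffunE.
Qed.

Lemma mutp_rv (x z : bits n) : mutp R (rv x) (rv z) = mutp R x z.
Proof. by rewrite /mutp ham_rv. Qed.

Lemma fork_rv (x : bits n) : ~~ inA x -> fork r (rv x) = fork r x.
Proof. by move=> hx; rewrite !fork_notA ?inA_rv // ones_rv. Qed.

Lemma fork_inA (x : bits n) : inA x -> (n.+1 <= fork r x)%N.
Proof. by case/orP => /eqP ->; rewrite ?fork_L ?fork_O. Qed.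

Lemma res_rv (x z : bits n) : ~~ inA x -> res (rv x) (rv z) = rv (res x z).
Proof.
move=> hx; rewrite /res fork_rv //.
have hxn : (fork r x <= n)%N by rewrite fork_notA // ones_le.
have e : (fork r x <= fork r (rv z))%N = (fork r x <= fork r z)%N.
  case hz: (inA z).
    have h1 := fork_inA z hz.
    have h2 := fork_inA (rv z); rewrite inA_rv in h2; have {}h2 := h2 hz.
    apply/idP/idP => _; lia.
  by rewrite fork_rv ?hz.
by rewrite e; case: ifP.
Qed.

Lemma step_rv (x y : bits n) : ~~ inA x -> step (rv x) (rv y) = step x y.
Proof.
move=> hx; rewrite !step_def (reindex_inj rv_inj) /=.
by apply: eq_bigr => z _; rewrite mutp_rv res_rv // (inj_eq rv_inj).
Qed.

Fixpoint dd (t : nat) (y : bits n) : R :=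
  match t with
  | 0 => (#|{: bits n}|%:R)^-1
  | t'.+1 => \sum_x dd t' x * step x y
  end.

Lemma inA_L : inA L. Proof. by rewrite /inA eqxx. Qed.
Lemma inA_O : inA O. Proof. by rewrite /inA eqxx orbT. Qed.

Lemma decomp (f : bits n -> R) :
  \sum_y f y = f L + f O + \sum_(y | ~~ inA y) f y.
Proof.
rewrite (bigD1 L) //= (bigD1 O) /=; last by rewrite eq_sym LneO.
rewrite addrA; congr (_ + _); apply: eq_bigl => y.
by rewrite /inA negb_or ?andbT andbC.
Qed.

Lemma card_bits_gt0 : (0 < #|{: bits n}|)%N.
Proof. by rewrite card_ffun card_bool card_ord expn_gt0. Qed.

Lemma dd_ge0 t (y : bits n) : 0 <= dd t y.
Proof.
elim: t y => [|t IH] y /=; first by rewrite invr_ge0 ler0n.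
by apply: sumr_ge0 => x _; apply: mulr_ge0; [exact: IH | exact: step_ge0].
Qed.

Lemma dd_sum1 t : \sum_y dd t y = 1.
Proof.
elim: t => [|t IH] /=.
  rewrite sumr_const -[_ *+ _]mulr_natr mulVf //.
  by rewrite pnatr_eq0 -lt0n card_bits_gt0.
rewrite exchange_big /=; rewrite -[RHS]IH; apply: eq_bigr => x _.
by rewrite -mulr_sumr step_sum mulr1.
Qed.

Lemma dd_succ_notA t (y : bits n) : ~~ inA y ->
  dd t.+1 y = \sum_(x | ~~ inA x) dd t x * step x y.
Proof.
move=> hy; rewrite /= decomp (@step_A_notA L y inA_L hy) (@step_A_notA O y inA_O hy).
by rewrite !mulr0 !add0r.
Qed.

Lemma dd_sym t (y : bits n) : ~~ inA y -> dd t (rv y) = dd t y.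
Proof.
elim: t y => [|t IH] y hy //.
rewrite dd_succ_notA ?inA_rv // dd_succ_notA // (reindex_inj rv_inj) /=.
apply: eq_big => x; first by rewrite inA_rv.
by rewrite inA_rv => hx; rewrite IH // step_rv.
Qed.

Definition MM t := \sum_(x | ~~ inA x) dd t x.

Lemma MM_ge0 t : 0 <= MM t.
Proof. by apply: sumr_ge0 => x _; exact: dd_ge0. Qed.

Lemma mass t : dd t L + dd t O + MM t = 1.
Proof. by rewrite -(dd_sum1 t) [RHS]decomp. Qed.

Lemma recur t : (1 - pL) * (MM t / 2 + dd t L) <= MM t.+1 / 2 + dd t.+1 L.
Proof.
set i1 := \sum_(x | ~~ inA x) dd t x * step x L.
have e2 : \sum_(x | ~~ inA x) dd t x * step x O = i1.
  rewrite (reindex_inj rv_inj) /=; apply: eq_big => x; first by rewrite inA_rv.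
  by rewrite inA_rv => hx; rewrite dd_sym // -rv_L step_rv.
have eL : dd t.+1 L = dd t L * (1 - pL) + i1.
  rewrite /= decomp step_OL mulr0 addr0; congr (_ + _).
  by rewrite /pL -step_LLO addrK.
have eM : MM t.+1 = MM t - i1 - i1.
  rewrite /MM; under eq_bigr => y hy do rewrite dd_succ_notA //.
  rewrite exchange_big /=.
  under eq_bigr => x _ do rewrite -mulr_sumr.
  have hs : forall x : bits n, \sum_(y | ~~ inA y) step x y = 1 - step x L - step x O.
    by move=> x; have := step_sum x; rewrite decomp => <-; ring.
  under eq_bigr => x _ do rewrite hs !mulrBr mulr1.
  by rewrite !sumrB e2.
rewrite eL eM.
have := MM_ge0 t; have := dd_ge0 t L; have := pL_ge0; have := pL_le1.
move=> *; nra.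
Qed.

Lemma Qbound t : (1 - pL) ^+ t / 2 <= MM t / 2 + dd t L.
Proof.
elim: t => [|t IH].
  have := mass 0; rewrite expr0 /= => h; lra.
apply: le_trans (recur t); rewrite exprS -mulrA.
apply: ler_wpM2l; last exact: IH.
by have := pL_le1; lra.
Qed.

Lemma single_bound t : (1 - pL) ^+ t / 2 <= 1 - dd t O.
Proof.
have := Qbound t; have := mass t; have := MM_ge0 t; lra.
Qed.

Lemma ddO_le1 t : dd t O <= 1.
Proof. have := mass t; have := MM_ge0 t; have := dd_ge0 t L; lra. Qed.

End Single.

Section Joint.
Variables (R : realType) (n r lam : nat).
Hypothesis hr : (0 < r)%N.
Hypothesis hnr : (2 * r < n)%N.

Let O := fork_opt n r.
Definition DD t (X : islands n lam) : R := \prod_i dd R n r t (X i).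

Lemma surv_eq t (X : islands n lam) :
  surv R r t X = if all_opt r X then 0 else DD t X.
Proof.
elim: t X => [|t IH] X.
  rewrite /= /islands_init; case: ifP => // _.
  rewrite /DD /= prodr_const card_ord card_ffun card_ord natrX exprVn //.
rewrite /=; case: ifP => hX //.
rewrite (eq_bigr (fun Y => DD t Y * islands_step R r Y X)); last first.
  move=> Y _; rewrite IH; case: ifP => hY //.
  move/negbT: hX; rewrite negb_forall => /existsP [i hi].
  move/forallP: hY => hY.
  rewrite /islands_step (bigD1 i) //= (eqP (hY i)) step_O // eq_sym (negbTE hi).
  by rewrite !mul0r mulr0.
rewrite /DD /islands_step.
under eq_bigr do rewrite -big_split /=.
rewrite -(bigA_distr_bigA (fun i y => dd R n r t y * ea_step R r y (X i))) /=.
by [].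
Qed.

Lemma DD_sum t : \sum_X DD t X = 1.
Proof.
rewrite /DD -(bigA_distr_bigA (fun i y => dd R n r t y)) /=.
by rewrite big1 // => i _; rewrite dd_sum1.
Qed.

Lemma tail_eq t : tailT R n r lam t = 1 - (dd R n r t O) ^+ lam.
Proof.
rewrite /tailT; under eq_bigr do rewrite surv_eq.
set c : islands n lam := [ffun => O].
have hall : forall X : islands n lam, all_opt r X = (X == c).
  move=> X; apply/forallP/eqP => [h|->].
    by apply/ffunP => i; rewrite ffunE; exact/eqP.
  by move=> i; rewrite ffunE.
have e1 : \sum_(X | X != c) (if all_opt r X then 0 else DD t X)
          = \sum_(X | X != c) DD t X.
  by apply: eq_bigr => X hX; rewrite hall (negbTE hX).
have e2 : DD t c = (dd R n r t O) ^+ lam.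
  rewrite /DD (eq_bigr (fun=> dd R n r t O)) ?prodr_const ?card_ord //.
  by move=> i _; rewrite ffunE.
have := DD_sum t; rewrite (bigD1 c) //= e2 => h.
rewrite (bigD1 c) //= hall eqxx add0r e1; lra.
Qed.

End Joint.

Lemma bern_dn (R : realType) (p : R) k : 0 <= p -> p <= 1 -> 1 - k%:R * p <= (1 - p) ^+ k.
Proof.
move=> h0 h1; elim: k => [|k IH]; first by rewrite expr0 mul0r subr0.
rewrite exprS -natr1; have h2 : 0 <= (1 - p) ^+ k by apply: exprn_ge0; lra.
have h3 : 0 <= k%:R :> R by exact: ler0n.
nra.
Qed.

Lemma bern_up (R : realType) (a : R) k : 0 <= a -> 1 + k%:R * a <= (1 + a) ^+ k.
Proof.
move=> h0; elim: k => [|k IH]; first by rewrite expr0 mul0r addr0.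
rewrite exprS -natr1; have h3 : 0 <= k%:R :> R by exact: ler0n.
nra.
Qed.

Lemma pow_half (R : realType) (a : R) (lam : nat) : 0 <= a -> a <= 1 ->
  1 <= lam%:R * a -> (1 - a) ^+ lam <= 1 / 2.
Proof.
move=> h0 h1 h2.
have hP : 0 <= (1 - a) ^+ lam by apply: exprn_ge0; lra.
have hQ : 2 <= (1 + a) ^+ lam by have := @bern_up R a lam h0; lra.
have hPQ : (1 - a) ^+ lam * (1 + a) ^+ lam <= 1.
  rewrite -exprMn; apply: exprn_ile1; nra.
nra.
Qed.

Theorem corollary3 (R : realType) (r : nat) : (2 <= r)%N ->
  exists c : R, 0 < c /\ exists n0 : nat, forall n lam : nat,
    (n0 <= n)%N -> (1 <= lam)%N -> (lam <= n ^ r)%N ->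
    ((c * lam%:R * n%:R ^+ (2 * r) * ln (lam%:R : R))%:E
       <= expected_evals R n r lam)%E.
Proof.
move=> hr2; exists (1/48); split; first lra.
exists (2 * r + 1)%N => n lam hn hlam _.
have hr : (0 < r)%N by lia.
have hnr : (2 * r < n)%N by lia.
set p := pL R n r.
have hp0 : 0 <= p := @pL_ge0 R n r hr hnr.
have hp1 : p <= 1 := @pL_le1 R n r hr hnr.
set m := (n ^ (2 * r))%N.
have hm2 : (2 <= m)%N.
  have := @leq_pexp2l n 1 (2 * r) ltac:(lia) ltac:(lia); rewrite expn1 /m; lia.
have hpm : p <= (m%:R)^-1.
  by have := @pL_le R n r hr hnr; rewrite exprVn /m natrX.
have hm0 : 0 < m%:R :> R by rewrite ltr0n; lia.
set k := (m %/ 2)%N.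
set J := trunc_log 2 lam.
have hJ : (2 ^ J <= lam)%N by apply: trunc_logP.
have hJ' : (lam < 2 ^ J.+1)%N by apply: trunc_log_ltn.
set N := (k * maxn 1 (J - 1))%N.
have hk : forall t, (t <= k)%N -> 1 / 2 <= (1 - p) ^+ t.
  move=> t ht; apply: le_trans (@bern_dn R p t hp0 hp1).
  have h1 : t%:R * p <= k%:R * (m%:R)^-1.
    apply: ler_pM; rewrite ?ler0n ?ler_nat //.
  have h2 : k%:R * (m%:R)^-1 <= 1 / 2 :> R.
    rewrite ler_pdivrMr // mulrC mulrA ler_pdivlMr //.
    rewrite mulr1 -natrM ler_nat /k; lia.
  lra.
have tail_ge : forall t, (t < N)%N -> 1 / 4 <= tailT R n r lam t.
  move=> t ht; rewrite (@tail_eq R n r lam hr hnr).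
  set x := dd R n r t (fork_opt n r).
  have hx0 : 0 <= x := @dd_ge0 R n r hr hnr t _.
  have hs := @single_bound R n r hr hnr t; rewrite -/p -/x in hs.
  set a := (1 - p) ^+ t / 2 in hs.
  have ha1 : a <= 1 / 2.
    rewrite /a; have : (1 - p) ^+ t <= 1 by apply: exprn_ile1; lra.
    lra.
  have key : x ^+ lam <= (1 - a) ^+ lam.
    by apply: lerXn2r; rewrite ?nnegrE //; lra.
  have [htk|htk] := ltnP t k.
    have ha : 1 / 4 <= a by have := hk t (ltnW htk); rewrite /a; lra.
    have : (1 - a) ^+ lam <= 1 - a.
      case: lam hlam {hJ hJ' J N ht key} => [//|l] _.
      rewrite exprS; apply: ler_piMr; first lra.
      by apply: exprn_ile1; lra.
    lra.
  have hJ2 : (2 <= J)%N.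
    case: (leqP 2 J) => // hJ1.
    have : (maxn 1 (J - 1) = 1)%N by lia.
    by move: ht; rewrite /N => + e; rewrite e muln1 => h; lia.
  have ht2 : (t <= k * (J - 1))%N.
    have e : maxn 1 (J - 1) = (J - 1)%N by lia.
    by move: ht; rewrite /N e => /ltnW.
  have hpow : (1 / 2) ^+ (J - 1) <= (1 - p) ^+ t.
    apply: le_trans (_ : ((1 - p) ^+ k) ^+ (J - 1) <= _).
      apply: lerXn2r; rewrite ?nnegrE; [lra | apply: exprn_ge0; lra | exact: hk].
    rewrite -exprM; apply: ler_wiXn2l => //; lra.
  have hla : 1 <= lam%:R * a.
    have e : (1 / 2 : R) ^+ (J - 1) = 2 * ((2 ^ J)%:R)^-1.
      rewrite natrX -exprVn div1r.
      have -> : J = (J - 1).+1 by lia.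
      by rewrite subSS subn0 exprS mulrA mulfV ?mul1r // pnatr_eq0.
    have hlJ : (2 ^ J)%:R <= lam%:R :> R by rewrite ler_nat.
    have h2J : 0 < (2 ^ J)%:R :> R by rewrite ltr0n expn_gt0.
    have : 2 * ((2 ^ J)%:R)^-1 <= 2 * a by rewrite -e /a; lra.
    move=> h; have hinv : ((2 ^ J)%:R)^-1 <= a by lra.
    have hi0 : 0 < ((2 ^ J)%:R)^-1 :> R by rewrite invr_gt0.
    have h3 : 1 <= (2 ^ J)%:R * a.
      have e1 : (2 ^ J)%:R * ((2 ^ J)%:R)^-1 = 1 :> R by rewrite mulfV // lt0r_neq0.
      by have := ler_wpM2l (ltW h2J) hinv; rewrite e1.
    have h4 : (2 ^ J)%:R * a <= lam%:R * a by apply: ler_wpM2r; lra.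
    lra.
  have hpt : 0 <= (1 - p) ^+ t by apply: exprn_ge0; lra.
  have ha0 : 0 <= a by rewrite /a; lra.
  have ha1' : a <= 1 by lra.
  have := @pow_half R a lam ha0 ha1' hla.
  lra.
have tail0 : forall t, 0 <= tailT R n r lam t.
  move=> t; rewrite (@tail_eq R n r lam hr hnr).
  have h0 := @dd_ge0 R n r hr hnr t (fork_opt n r).
  have h1 := @ddO_le1 R n r hr hnr t.
  have : (dd R n r t (fork_opt n r)) ^+ lam <= 1 by apply: exprn_ile1.
  lra.
have hE : ((N%:R / 4)%:E <= expected_rounds R n r lam)%E.
  rewrite /expected_rounds.
  apply: (@le_trans _ _ (\sum_(0 <= i < N) (tailT R n r lam i)%:E)%E); last first.
    by apply: nneseries_lim_ge => i _ _; rewrite lee_fin.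
  rewrite sumEFin lee_fin big_mkord.
  apply: le_trans (_ : \sum_(i < N) (1 / 4 : R) <= _).
    by rewrite sumr_const card_ord -mulr_natr; lra.
  by apply: ler_sum => i _; apply: tail_ge.
have hln : ln (lam%:R : R) <= J.+1%:R.
  have e1 : (2 : R) <= expR 1 by have := expR_ge1Dx (1 : R); lra.
  have e2 : lam%:R <= expR 1 ^+ J.+1 :> R.
    apply: le_trans (_ : (2 ^ J.+1)%:R <= _).
      by rewrite ler_nat ltnW.
    rewrite natrX; apply: lerXn2r; rewrite ?nnegrE //.
  rewrite -expRM_natl mulr1 in e2.
  rewrite -[X in _ <= X]expRK ler_ln //; [rewrite posrE ltr0n; lia | by rewrite posrE expR_gt0].
have hnat : (m * J.+1 <= 12 * N)%N.
  have h1 : (m <= 4 * k)%N by rewrite /k; lia.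
  have h2 : (J.+1 <= 3 * maxn 1 (J - 1))%N by lia.
  have := leq_mul h1 h2; rewrite /N; nia.
have hreal : (m%:R * J.+1%:R <= 12 * N%:R :> R).
  by rewrite -natrM -[12]/(12%:R) -natrM ler_nat.
rewrite /expected_evals.
apply: le_trans (_ : (lam%:R)%:E * (N%:R / 4)%:E <= _)%E; last first.
  apply: lee_pmul => //; rewrite lee_fin ?ler0n //.
rewrite -EFinM lee_fin.
have -> : n%:R ^+ (2 * r) = m%:R :> R by rewrite /m natrX.
have hl0 : 0 <= lam%:R :> R by exact: ler0n.
have hm0' : 0 <= m%:R :> R by exact: ler0n.
apply: le_trans (_ : 1 / 48 * lam%:R * m%:R * J.+1%:R <= _).
  apply: ler_wpM2l => //; apply: mulr_ge0 => //; apply: mulr_ge0 => //; lra.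
nra.
Qed.
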